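(* Let $D$ be a checkerboard colorable virtual link diagram and let $G_D$ be a signed Tait graph of $D$. Then $\langle D\rangle(A,B,d)=F[G_D](A,B,d)$.
   Context: A virtual link diagram is a plane curve with real crossings and virtual crossings. It is checkerboard colorable if one can color a small neighbourhood of one side of each arc so that near each real crossing the colored sides alternate, and near each virtual crossing the colorings of the two strands pass through independently. Bracket polynomial: $\langle D\rangle(A,B,d)=\sum_{\sigma}A^{\alpha(\sigma)}B^{\beta(\sigma)}d^{|\sigma|-1}$, the sum over all states $\sigma$ (choice of $A$- or $B$-smoothing at every real crossing), $\alpha(\sigma),\beta(\sigma)$ the numbers of $A$- and $B$-smoothings, $|\sigma|$ the number of closed curves. Signed Tait graph (Chmutov–Pak): given a checkerboard coloring of $D$, thicken $D$ to a surface in which bands at virtual crossings pass without touching; the colored neighbourhoods form annuli whose exterior circles run along the diagram, jumping between strands at real crossings so that the two colored corners of each crossing lie on them. Replace each real crossing by an edge-ribbon joining the exterior-circle arcs at the two colored corners and glue discs along the interior circles. The result is an orientable signed ribbon graph (vertices = capped annuli, edges = real crossings, edge sign $+$ iff the $A$-smoothing of the crossing joins the two colored corners), i.e. a signed cyclic graph $G_D$ (cyclic graph: graph with cyclic ordering of half-edges at each vertex). The polynomial $F[G]$ of a signed cyclic graph $G$: edges may be ''marked''; for an unmarked edge $e$, $G-e$ deletes $e$ and $G(\bar e)$ keeps $e$ and marks it; $F[G]=B\,F[G-e]+A\,F[G(\bar e)]$ if $e$ is positive, $F[G]=A\,F[G-e]+B\,F[G(\bar e)]$ if $e$ is negative;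 and if $H$ is a spanning subgraph (all vertices, a subset of edges with induced cyclic order) all of whose edges are marked, $F[H]=d^{bc(H)-1}$, with $bc(H)$ the number of boundary components of the ribbon graph of $H$. *)

(* Defs.v *)
From mathcomp Require Import all_boot all_order all_algebra.
Unset Printing Implicit Defensive.
Import GRing.Theory.
Local Open Scope ring_scope.

(* Virtual crossings are invisible to all notions involved (states, curves,  *)
(* colourings, the thickened surface); a virtual diagram is encoded by its   *)
(* real crossings, the cyclic (counterclockwise) order 0,1,2,3 of the four   *)
(* half-edges at each real crossing, the arcs joining half-edges (through    *)
(* virtual crossings), the over/under information, and the number of         *)
(* crossingless closed components.                                           *)
(* Corner j at crossing c is the region between half-edges j and j+1.       *)
Record vdiagram := VDiagram {
  vd_X : finType;
  vd_arc : vd_X * 'I_4 -> vd_X * 'I_4;          (* other end of the arc *)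
  vd_over : vd_X -> bool;  (* true: the strand through half-edges 0,2 is over *)
  vd_loops : nat           (* closed components without real crossings *)
}.
Arguments vd_arc : clear implicits.
Arguments vd_over : clear implicits.

Definition vdiagram_wf (D : vdiagram) : Prop :=
  (forall h, vd_arc D (vd_arc D h) = h) /\ (forall h, vd_arc D h <> h).

(* Kauffman's convention: corner j of c is an A-region (swept when the
   overstrand is rotated counterclockwise); these are corners 0,2 when the
   strand 0-2 is over, and corners 1,3 otherwise. *)
Definition corner_is_A (D : vdiagram) (c : vd_X D) (j : 'I_4) : bool :=
  odd j != vd_over D c.

(* smoothing at crossing c; s = true: A-smoothing (joins the two A-corners),
   s = false: B-smoothing.  The smoothing joining corners k, k+2 replaces the
   crossing by the two arcs hugging corners k+1 and k+3; a hugged corner j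
   connects half-edges j and j+1.  [smooth_partner] gives the half-edge to
   which h is connected by the smoothing. *)
Definition hugged (D : vdiagram) (s : bool) (c : vd_X D) (j : 'I_4) : bool :=
  corner_is_A D c j != s.

Definition smooth_partner (D : vdiagram) (s : bool) (h : vd_X D * 'I_4)
  : vd_X D * 'I_4 :=
  if hugged D s h.1 h.2 then (h.1, ordS h.2) else (h.1, ord_pred h.2).

(* the closed curves of a state: components of the graph on half-edges whose
   edges are the arcs and the smoothing connections *)
Definition state_rel (D : vdiagram) (st : {ffun vd_X D -> bool})
  : rel (vd_X D * 'I_4) :=
  fun x y => (vd_arc D x == y) || (smooth_partner D (st x.1) x == y).

Definition state_curves (D : vdiagram) (st : {ffun vd_X D -> bool}) : nat :=
  #|[pred x | fingraph.root (state_rel D st) x == x]| + vd_loops D.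

(* Bracket polynomial, evaluated at A B d in a commutative ring
   (the polynomial identity in Z[A,B,d] is equivalent to this identity for
   all commutative rings and all values). *)
Definition bracket {R : comPzRingType} (D : vdiagram) (A B d : R) : R :=
  \sum_(st : {ffun vd_X D -> bool})
     A ^+ #|[set c | st c]| * B ^+ #|[set c | ~~ st c]|
       * d ^+ (state_curves D st).-1.

(* Checkerboard colouring: col h = true iff the coloured side of the arc at
   half-edge h is the left side when leaving the crossing along h.  Left of
   half-edge i is corner i, right of half-edge i is corner i-1.  The two ends
   of an arc colour opposite sides (left at one end = right at the other),
   and colours alternate around each real crossing (coloured corners
   alternate). *)
Definition checkerboard (D : vdiagram) (col : vd_X D * 'I_4 -> bool) : Prop :=
  (forall h, col (vd_arc D h) = ~~ col h) /\
  (forall c (i : 'I_4), col (c, ordS i) = ~~ col (c, i)).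

(* Signed cyclic graphs (= orientable signed ribbon graphs), encoded as      *)
(* combinatorial maps: edges E, half-edges E * bool (the two ends of e are   *)
(* (e,false),(e,true)), rotation cg_rot = next half-edge counterclockwise at  *)
(* the same vertex; vertices carrying half-edges are the cg_rot-orbits, and   *)
(* cg_iso further isolated vertices.                                         *)
Record cgraph := CGraph {
  cg_E : finType;
  cg_rot : cg_E * bool -> cg_E * bool;
  cg_iso : nat;
  cg_sign : cg_E -> bool        (* true = positive edge *)
}.
Arguments cg_rot : clear implicits.
Arguments cg_sign : clear implicits.

Section CGraphDefs.
Variable G : cgraph.
Local Notation dart := (cg_E G * bool)%type.

Definition flipd (x : dart) : dart := (x.1, ~~ x.2).

(* induced cyclic order on the half-edges of the edges in S *)
Definition rot_in (S : {set cg_E G}) (x : dart) : dart :=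
  let s := traject (cg_rot G) (cg_rot G x) #|{: dart}| in
  nth x s (find (fun y : dart => y.1 \in S) s).

(* boundary-walk permutation of the spanning subgraph with edge set S *)
Definition face_perm (S : {set cg_E G}) (x : dart) : dart :=
  if x.1 \in S then rot_in S (flipd x) else x.

(* number of boundary components of the ribbon graph of the spanning
   subgraph (all vertices, edges S): faces, plus one per vertex with no
   edge of S *)
Definition bc (S : {set cg_E G}) : nat :=
  #|[pred x : dart | (x.1 \in S) && (froot (face_perm S) x == x)]|
  + #|[pred x : dart | (froot (cg_rot G) x == x) &&
                       [forall y : dart, fconnect (cg_rot G) x y ==> (y.1 \notin S)]]|
  + cg_iso G.

(* F[G] via the deletion / marking recursion: the state is the set E' of
   present edges and the set M of marked ones; the unmarked edge used is the
   first one.  n is fuel (#|E| suffices). *)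
Fixpoint Frec {R : comPzRingType} (A B d : R) (n : nat)
    (E' M : {set cg_E G}) : R :=
  match n with
  | 0 => d ^+ (bc E').-1
  | n'.+1 =>
    match [pick e in E' :\: M] with
    | None => d ^+ (bc E').-1
    | Some e =>
        if cg_sign G e then
          B * Frec A B d n' (E' :\ e) M + A * Frec A B d n' E' (e |: M)
        else
          A * Frec A B d n' (E' :\ e) M + B * Frec A B d n' E' (e |: M)
    end
  end.

Definition Fpoly {R : comPzRingType} (A B d : R) : R :=
  Frec A B d #|{: cg_E G}| setT set0.

End CGraphDefs.

(* Edges = real crossings; the two half-edges of crossing c sit at its two   *)
(* coloured corners tait_corner c false / true.  The rotation follows the    *)
(* exterior circle of the coloured annulus (coloured side on the left):      *)
(* from coloured corner i of c, leave along half-edge i (coloured on the     *)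
(* left), reach half-edge j of c' = arc (c,i), and arrive at corner j-1.     *)
(* Crossingless components give isolated vertices.                           *)
Section Tait.
Variables (D : vdiagram) (col : vd_X D * 'I_4 -> bool).

Definition tait_corner (c : vd_X D) (b : bool) : 'I_4 :=
  inord ((~~ col (c, ord0)) + 2 * b)%N.

Definition tait_rot (x : vd_X D * bool) : vd_X D * bool :=
  let h := vd_arc D (x.1, tait_corner x.1 x.2) in
  (h.1, (2 <= ord_pred h.2)%N).

(* positive iff the A-smoothing joins the two coloured corners *)
Definition tait_sign (c : vd_X D) : bool := corner_is_A D c (tait_corner c false).

Definition tait_graph : cgraph :=
  @CGraph (vd_X D) tait_rot (vd_loops D) tait_sign.

End Tait.

(* Main.v *)
Require Import Defs.
From mathcomp Require Import all_boot all_order all_algebra.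
Set Implicit Arguments. Unset Strict Implicit. Unset Printing Implicit Defensive.
Import GRing.Theory.

Lemma my_n_comp (T T' : finType) (h : T' -> T) (e : rel T) (e' : rel T')
    (a : {pred T}) (a' : {pred T'}) :
  connect_sym e -> connect_sym e' -> closed e a -> closed e' a' ->
  {in a', forall x', h x' \in a} ->
  (forall x, x \in a -> exists2 x', x' \in a' & connect e x (h x')) ->
  {in a' &, forall x' y', connect e' x' y' = connect e (h x') (h y')} ->
  n_comp e a = n_comp e' a'.
Proof.
move=> se se' cla cla' ha hs hf.
have inj_h: {in predI (fingraph.roots e') a' &, injective (fingraph.root e \o h)}.
  move=> x' y' /andP[/eqP rx ax] /andP[/eqP ry ay] /= /(fingraph.rootP se).
  by rewrite -hf // => /(fingraph.rootP se'); rewrite rx ry.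
rewrite /n_comp_mem -(card_in_image inj_h); apply: eq_card => x.
apply/andP/imageP => [[/eqP rx ax] | [x' /andP[/eqP rx' ax'] ->]]; last first.
  split; first exact: (fingraph.roots_root se).
  change (fingraph.root e (h x') \in a).
  by rewrite -(closed_connect cla (fingraph.connect_root _ _)); apply: ha.
have [y' ay' exy] := hs x ax.
have ar : fingraph.root e' y' \in a' by rewrite -(closed_connect cla' (fingraph.connect_root _ _)).
exists (fingraph.root e' y'); first by apply/andP; split; [exact: (fingraph.roots_root se') | exact: ar].
have c1 : connect e (h y') (h (fingraph.root e' y')) by rewrite -hf // fingraph.connect_root.
by rewrite /= -(fingraph.rootP se c1) -(fingraph.rootP se exy) rx.
Qed.

Lemma iter_inj (T : Type) (f : T -> T) n : injective f -> injective (iter n f).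
Proof. by move=> fi; elim: n => //= n IH x y /fi /IH. Qed.

Section Generic.
Variables (T : finType) (r : T -> T) (fl : T -> T) (P : pred T).
Hypotheses (rinj : injective r) (flK : involutive fl) (Pfl : forall x, P (fl x) = P x).

Definition rin x := let s := traject r (r x) #|T| in nth x s (find P s).
Definition fp x := if P x then rin (fl x) else x.
Definition qq x := let y := r x in if P y then fl y else y.

Lemma rinP x : P x -> exists k, [/\ 0 < k, rin x = iter k r x, P (iter k r x)
   & forall j, 0 < j < k -> ~~ P (iter j r x)].
Proof.
move=> Px; set s := traject r (r x) #|T|.
have hs : has P s.
  apply/hasP; exists (iter (order r x) r x); last by rewrite iter_order.
  apply/trajectP; exists (order r x).-1.
    have ho : order r x <= #|T| by apply: max_card.
    by rewrite prednK ?order_gt0.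
  by rewrite -iterSr prednK ?order_gt0.
have fs : find P s < #|T| by rewrite -(size_traject r (r x) #|T|) -has_find.
exists (find P s).+1; split => //.
- by rewrite /rin -/s (set_nth_default (r x)) ?size_traject // (nth_traject r fs) iterSr.
- by rewrite iterSr -(nth_traject r fs) (set_nth_default x) ?size_traject // nth_find.
- case=> // j /andP[_]; rewrite ltnS => ji; have jT := ltn_trans ji fs.
  by rewrite iterSr -(nth_traject r jT) (set_nth_default x) ?size_traject // before_find.
Qed.

Lemma P_rin x : P x -> P (rin x).
Proof. by case/rinP => k [_ -> ]. Qed.

Lemma rin_inj_aux u v k m : k <= m -> 0 < k ->
  (forall j, 0 < j < m -> ~~ P (iter j r v)) -> P u ->
  iter k r u = iter m r v -> u = v.
Proof.
move=> km k0 hm Pu E.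
have E2 : iter k r u = iter k r (iter (m - k) r v) by rewrite -iterD subnKC.
have {}E2 := iter_inj rinj E2.
case: (posnP (m - k)) => [mk0|mkp]; first by rewrite E2 mk0.
have m0 : 0 < m := leq_trans k0 km.
by have := hm (m - k); rewrite mkp /= -E2 Pu ltn_subrL k0 m0 => /(_ isT).
Qed.

Lemma rin_inj u v : P u -> P v -> rin u = rin v -> u = v.
Proof.
move=> Pu Pv; case/rinP: (Pu) => k [k0 -> Pk hk]; case/rinP: (Pv) => m [m0 -> Pm hm].
case: (leqP k m) => km E; first exact: rin_inj_aux km k0 hm Pu E.
by apply/esym/(rin_inj_aux (ltnW km) m0 hk Pv)/esym.
Qed.

Lemma fp_inj : injective fp.
Proof.
move=> x y; rewrite /fp; case Px: (P x); case Py: (P y).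
- move=> E; apply: (can_inj flK); apply: rin_inj E; by rewrite Pfl.
- by move=> E; move: (@P_rin (fl x)); rewrite Pfl Px E Py => /(_ isT).
- by move=> E; move: (@P_rin (fl y)); rewrite Pfl Py -E Px => /(_ isT).
- by [].
Qed.

Lemma qq_inj : injective qq.
Proof.
move=> x y; rewrite /qq; case Px: (P (r x)); case Py: (P (r y)).
- by move/(can_inj flK)/rinj.
- by move=> E; move: Py; rewrite -E Pfl Px.
- by move=> E; move: Px; rewrite E Pfl Py.
- by move/rinj.
Qed.

Definition aH := [pred w | [exists u, P u && fconnect qq w u]].
Definition Ar := [pred x | [forall y, fconnect r x y ==> ~~ P y]].

Lemma sym_qq : connect_sym (coerced_frel qq).
Proof. move=> x y; exact: (fconnect_sym qq_inj). Qed.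
Lemma sym_fp : connect_sym (coerced_frel fp).
Proof. move=> x y; exact: (fconnect_sym fp_inj). Qed.
Lemma sym_r : connect_sym (coerced_frel r).
Proof. move=> x y; exact: (fconnect_sym rinj). Qed.

Lemma closed_aH : closed (coerced_frel qq) aH.
Proof.
apply: (intro_closed sym_qq) => x y /eqP <- /existsP[u /andP[Pu cu]].
by apply/existsP; exists u; rewrite Pu -(same_fconnect1 qq_inj).
Qed.

Lemma qq_first x : P x -> exists k, [/\ 0 < k, iter k qq (fl x) = fl (fp x)
   & forall j, 0 < j < k -> ~~ P (iter j qq (fl x))].
Proof.
move=> Px; have Pfx : P (fl x) by rewrite Pfl.
case/rinP: Pfx => k [k0 E Pk hk].
have eqi : forall j, j < k -> iter j qq (fl x) = iter j r (fl x).
  elim=> // j IH jk; rewrite iterS IH ?(ltn_trans _ jk) // /qq -iterS.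
  by have := hk j.+1; rewrite jk => /(_ isT) /negbTE ->.
exists k; split => //.
- by case: k k0 E Pk hk eqi => // k _ E Pk hk eqi; rewrite iterS eqi // /qq -iterS Pk /fp Px E.
- by move=> j /andP[j0 jk]; rewrite eqi // hk // j0.
Qed.

Lemma count_faces : n_comp (coerced_frel qq) aH = n_comp (coerced_frel fp) P.
Proof.
apply: (@my_n_comp _ _ fl) => //.
- exact: sym_qq.
- exact: sym_fp.
- exact: closed_aH.
- apply: (intro_closed sym_fp) => x y /eqP <-; rewrite !unfold_in.
  by move=> Px; rewrite /fp Px; apply: P_rin; rewrite Pfl.
- move=> x; rewrite !unfold_in => Px; apply/existsP; exists (fl x); by rewrite Pfl Px connect0.
- move=> x /existsP[u /andP[Pu cu]]; exists (fl u); last by rewrite flK.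
  by rewrite unfold_in /= Pfl.
move=> x y; rewrite !unfold_in => Px Py; apply/idP/idP.
- move/iter_findex; move: (findex _ _ _) => n <-.
  elim: n x Px {Py} => [|n IH] x Px; first exact: connect0.
  rewrite iterSr; apply: connect_trans (IH _ _).
    by case: (qq_first Px) => k [_ <- _]; apply: fconnect_iter.
  by rewrite /fp Px; apply: P_rin; rewrite Pfl.
- move/iter_findex; move: (findex _ _ _) => m.
  elim: m {-2}m (leqnn m) x Px => [|M IH] m mM x Px.
    by move: mM; rewrite leqn0 => /eqP -> /= /(can_inj flK) ->; apply: connect0.
  case: (qq_first Px) => k [k0 Ek hk] Em.
  case: (leqP k m) => km.
    have Pf : P (fp x) by rewrite /fp Px; apply: P_rin; rewrite Pfl.
    have := IH (m - k) _ (fp x) Pf; rewrite -Ek -iterD subnK // => /(_ _ Em).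
    have mkM : m - k <= M by rewrite leq_subLR (leq_trans mM) // addnC -addn1 leq_add2l.
    by move=> H; apply: connect_trans (H mkM); exact: (fconnect1 fp x).
  case: m mM Em km => [|m] mM Em km.
    by move: Em => /= /(can_inj flK) ->; apply: connect0.
  by have := hk m.+1; rewrite km Em Pfl Py => /(_ isT).
Qed.

Lemma iter_noH x : x \notin aH -> forall n, iter n qq x = iter n r x.
Proof.
move=> xa; elim=> // n IH; rewrite !iterS IH /qq.
case Pr: (P (r (iter n r x))) => //.
case/negP: xa; apply/existsP; exists (iter n.+1 qq x).
by rewrite fconnect_iter andbT iterS IH /qq Pr Pfl.
Qed.

Lemma iter_Ar x : x \in Ar -> forall n, iter n qq x = iter n r x.
Proof.
move=> /forallP xa; elim=> // n IH; rewrite !iterS IH /qq.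
by have := xa (iter n.+1 r x); rewrite fconnect_iter /= => /negbTE ->.
Qed.

Lemma count_empty : n_comp (coerced_frel qq) [predC aH] = n_comp (coerced_frel r) Ar.
Proof.
symmetry; apply: (@my_n_comp _ _ id) => //.
- exact: sym_r.
- exact: sym_qq.
- apply: (intro_closed sym_r) => x y /eqP <- /forallP xa; apply/forallP => z.
  by apply/implyP => cz; apply: (implyP (xa z)); apply: connect_trans cz; exact: (fconnect1 r x).
- exact: (predC_closed closed_aH).
- move=> x xa; apply/forallP => y; apply/implyP => /iter_findex <-.
  rewrite -iter_noH //; apply/negP => Py; case/negP: xa; apply/existsP.
  by exists (iter (findex r x y) qq x); rewrite Py fconnect_iter.
- move=> x xa; exists x; last exact: connect0.
  rewrite inE; apply/negP => /existsP[u /andP[Pu /iter_findex]].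
  rewrite iter_Ar // => Eu; move/forallP: xa => /(_ u); rewrite -Eu fconnect_iter Eu Pu.
  by [].
move=> x y xa ya; apply/idP/idP => /iter_findex <-.
- by rewrite iter_noH // fconnect_iter.
- by rewrite -iter_noH // fconnect_iter.
Qed.

End Generic.


Definition tc (b0 b : bool) : 'I_4 := inord ((~~ b0) + 2 * b)%N.

Lemma loc_col_tc b0 b : b0 (+) odd (tc b0 b) = true.
Proof. by case: b0; case: b; rewrite /tc /= inordK. Qed.

Lemma loc_psi_tc b0 b : (2 <= tc b0 b)%N = b.
Proof. by case: b0; case: b; rewrite /tc /= inordK. Qed.

Lemma loc_tc_psi b0 (i : 'I_4) : b0 (+) odd i = true -> tc b0 (2 <= i)%N = i.
Proof.
by case: b0; case: i => [[|[|[|[|i]]]] Hi] //= _; apply/val_inj; rewrite /= inordK.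
Qed.

Lemma loc_odd_S (j : 'I_4) : odd (ordS j) = ~~ odd j.
Proof. by case: j => [[|[|[|[|i]]]] Hi]. Qed.
Lemma loc_odd_P (j : 'I_4) : odd (ord_pred j) = ~~ odd j.
Proof. by case: j => [[|[|[|[|i]]]] Hi]. Qed.

Lemma loc_spK (ov s : bool) (j : 'I_4) :
  let j' := if (odd j != ov) != s then ordS j else ord_pred j in
  (if (odd j' != ov) != s then ordS j' else ord_pred j') = j.
Proof.
by case: ov; case: s; case: j => [[|[|[|[|i]]]] Hi] //=; apply/val_inj.
Qed.

Lemma loc_q (b0 ov s : bool) (j : 'I_4) : (b0 (+) odd j) = false ->
  tc b0 (if s == (odd (tc b0 false) != ov) then ~~ (2 <= ord_pred j)%N else (2 <= ord_pred j)%N)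
  = if ((odd j != ov) != s) then ordS j else ord_pred j.
Proof.
case: b0; case: ov; case: s; case: j => [[|[|[|[|j]]]] Hj] //= _; apply/val_inj; rewrite /= ?inordK //.
Qed.


Section Diagram.
Variables (D : vdiagram) (col : vd_X D * 'I_4 -> bool).
Hypotheses (wf : vdiagram_wf D) (cb : checkerboard D col).
Local Notation HE := (vd_X D * 'I_4)%type.
Local Notation DT := (vd_X D * bool)%type.
Local Notation arc := (vd_arc D).

Lemma arcK : involutive arc. Proof. exact: wf.1. Qed.
Lemma col_arc h : col (arc h) = ~~ col h. Proof. exact: cb.1. Qed.

Lemma colE c i : col (c, i) = col (c, ord0) (+) odd i.
Proof.
have cS := cb.2 c.
case: i => [[|[|[|[|i]]]] Hi] //=.
- by rewrite addbF; have -> : Ordinal Hi = ord0 by apply/val_inj.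
- have -> : Ordinal Hi = ordS ord0 by apply/val_inj.
  by rewrite cS addbT.
- have -> : Ordinal Hi = ordS (ordS ord0) by apply/val_inj.
  by rewrite cS cS negbK addbF.
- have -> : Ordinal Hi = ordS (ordS (ordS ord0)) by apply/val_inj.
  by rewrite cS cS cS negbK addbT.
Qed.

Definition phi (x : DT) : HE := (x.1, tait_corner D col x.1 x.2).
Definition psi (h : HE) : DT := (h.1, (2 <= h.2)%N).

Lemma tcE c b : tait_corner D col c b = tc (col (c, ord0)) b. Proof. by []. Qed.

Lemma col_phi x : col (phi x) = true.
Proof. by rewrite /phi colE tcE loc_col_tc. Qed.

Lemma psiK x : psi (phi x) = x.
Proof. by case: x => c b; rewrite /psi /phi /= tcE loc_psi_tc. Qed.

Lemma phiK h : col h = true -> phi (psi h) = h.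
Proof. by case: h => c i; rewrite colE /phi /psi /= tcE => /loc_tc_psi ->. Qed.

Lemma phi_inj : injective phi. Proof. exact: can_inj psiK. Qed.

Variable st : {ffun vd_X D -> bool}.

Definition sp (h : HE) : HE := smooth_partner D (st h.1) h.

Lemma sp_fst h : (sp h).1 = h.1.
Proof. by rewrite /sp /smooth_partner; case: ifP. Qed.

Lemma spE h : sp h = (h.1, if (odd h.2 != vd_over D h.1) != st h.1 then ordS h.2 else ord_pred h.2).
Proof. by rewrite /sp /smooth_partner /hugged /corner_is_A; case: ifP. Qed.

Lemma spK : involutive sp.
Proof.
move=> [c j]; rewrite spE /= spE /=; congr (_, _); exact: loc_spK.
Qed.

Lemma col_sp h : col (sp h) = ~~ col h.
Proof.
case: h => c j; rewrite spE /= (colE c j); case: ifP => _;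
  by rewrite colE ?loc_odd_S ?loc_odd_P addbN.
Qed.

Definition p h := sp (arc h).
Definition H := [set c | st c == tait_sign D col c].
Definition flipH (y : DT) : DT := if y.1 \in H then (y.1, ~~ y.2) else y.
Definition q x := flipH (tait_rot D col x).

Lemma flipHK : involutive flipH.
Proof. by case=> c b; rewrite /flipH /=; case cH: (c \in H) => /=; rewrite cH ?negbK. Qed.

Lemma phi_q x : phi (q x) = p (phi x).
Proof.
rewrite /q /p /tait_rot -/(phi x).
case E: (arc (phi x)) => [c j] /=.
have cj : col (c, ord0) (+) odd j = false.
  by rewrite -colE -E col_arc col_phi.
rewrite spE /= /flipH /= /phi /= tcE -(loc_q (vd_over D c) (st c) cj).
by rewrite /H inE /tait_sign /corner_is_A tcE; case: ifP.
Qed.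

Lemma p_inj : injective p.
Proof. move=> x y; rewrite /p => E; apply: (can_inj arcK); exact: (can_inj spK E). Qed.

Lemma q_inj : injective q.
Proof. by move=> x y E; apply: phi_inj; apply: p_inj; rewrite -!phi_q E. Qed.

Lemma trot_inj : injective (tait_rot D col).
Proof.
by move=> x y E; apply: q_inj; rewrite /q E.
Qed.

Lemma psi_q u : q u = psi (p (phi u)).
Proof. by rewrite -phi_q psiK. Qed.

Lemma state_sym : symmetric (state_rel D st).
Proof.
move=> x y; rewrite /state_rel -/(sp x) -/(sp y).
have -> : (arc x == y) = (arc y == x) by apply/eqP/eqP => <-; rewrite arcK.
by have -> : (sp x == y) = (sp y == x) by apply/eqP/eqP => <-; rewrite spK.
Qed.

Lemma state_count : n_comp (state_rel D st) predT = n_comp (coerced_frel q) predT.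
Proof.
have sq : connect_sym (coerced_frel q) by move=> x y; exact: (fconnect_sym q_inj).
apply: (@my_n_comp _ _ phi) => //.
- exact: sym_connect_sym state_sym.
- move=> x; case cx: (col x).
    by exists (psi x) => //; rewrite phiK // connect0.
  exists (psi (arc x)) => //; rewrite phiK ?col_arc ?cx //.
  by apply: connect1; rewrite /state_rel eqxx.
move=> x y _ _; apply/idP/idP.
- move/iter_findex => <-; elim: (findex _ _ _) => [|n IH]; first exact: connect0.
  apply: connect_trans IH _; rewrite iterS phi_q.
  set z := iter n q x.
  have e1 : state_rel D st (phi z) (arc (phi z)) by rewrite /state_rel eqxx.
  have e2 : state_rel D st (arc (phi z)) (p (phi z)) by rewrite /state_rel /p /sp eqxx orbT.
  exact: connect_trans (connect1 e1) (connect1 e2).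
- pose I := [pred z | fconnect q x (psi (if col z then z else arc z))].
  have cI : closed (state_rel D st) I.
    apply: (intro_closed (sym_connect_sym state_sym)) => z w /orP[] /eqP <-; rewrite !inE.
    + rewrite col_arc; case cz: (col z) => /=; by rewrite ?arcK ?cz.
    + rewrite -/(sp z) col_sp; case cz: (col z) => /=.
        move=> hz; rewrite (same_fconnect1_r q_inj) psi_q phiK; last by rewrite col_arc col_sp cz.
        by rewrite /p arcK spK.
      move=> hz; rewrite (same_fconnect1_r q_inj) in hz.
      by rewrite psi_q phiK ?col_arc ?cz // /p arcK in hz.
  have := closed_connect cI; move=> /(_ (phi x) (phi y)) cc /cc.
  by rewrite !inE !col_phi !psiK connect0 => <-.
Qed.

End Diagram.

Section Final.
Variables (D : vdiagram) (col : vd_X D * 'I_4 -> bool).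
Hypotheses (wf : vdiagram_wf D) (cb : checkerboard D col).
Variable st : {ffun vd_X D -> bool}.
Local Notation G := (tait_graph D col).

Lemma curves_bc : state_curves D st = bc G (H col st).
Proof.
rewrite /state_curves /bc /=; congr (_ + _).
pose P := (fun y : vd_X D * bool => y.1 \in H col st).
have rinj := trot_inj wf cb st.
have flK : involutive (flipd G) by case=> c b; rewrite /flipd /= negbK.
have Pfl : forall x, P (flipd G x) = P x by [].
have -> : #|[pred x | fingraph.root (state_rel D st) x == x]| = n_comp (state_rel D st) predT.
  by apply: eq_card => x; rewrite !inE andbT.
rewrite (state_count wf cb st).
have -> : fcard (q col st) predT = fcard (qq (tait_rot D col) (flipd G) P) predT by [].
have -> : fcard (qq (tait_rot D col) (flipd G) P) predT =
   fcard (qq (tait_rot D col) (flipd G) P) (aH (tait_rot D col) (flipd G) P)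
   + fcard (qq (tait_rot D col) (flipd G) P) [predC (aH (tait_rot D col) (flipd G) P)].
  by rewrite -n_compC; apply: eq_n_comp_r => x; rewrite !inE.
rewrite (count_faces rinj flK Pfl) (count_empty rinj flK Pfl).
congr (_ + _).
apply: eq_card => x; rewrite !inE andbC; congr (_ && _).
by rewrite unfold_in /P inE.
Qed.
End Final.



Section FrecSum.
Local Open Scope ring_scope.
Variables (R : comPzRingType) (G : cgraph) (A B d : R).
Local Notation E := (cg_E G).

Definition wt (sg b : bool) : R := if b == sg then A else B.

Definition Cfg (E' M : {set E}) (st : {ffun E -> bool}) : bool :=
  [forall e, ((e \in M) ==> st e) && ((e \notin E') ==> ~~ st e)].

Definition Ssum (E' M : {set E}) : R :=
  \sum_(st : {ffun E -> bool} | Cfg E' M st)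
     (\prod_(e in E' :\: M) wt (cg_sign G e) (st e)) * d ^+ (bc G [set e | st e]).-1.

Lemma Ssum_base (E' M : {set E}) : E' :\: M = set0 -> M \subset E' ->
  Ssum E' M = d ^+ (bc G E').-1.
Proof.
move=> D0 ME; have EM : E' = M.
  apply/eqP; rewrite eqEsubset ME andbT; apply/subsetP => x xE.
  by apply/negPn/negP => xM; move/setP: D0 => /(_ x); rewrite !inE xM xE.
rewrite /Ssum (big_pred1 [ffun e => e \in M]) => [|st]; last first.
  rewrite /Cfg /=; apply/forallP/eqP => [H|->].
    by apply/ffunP => e; rewrite ffunE; have := H e; rewrite EM; case: (e \in M); case: (st e).
  by move=> e; rewrite ffunE EM; case: (e \in M).
rewrite D0 big_set0 mul1r; congr (d ^+ (bc G _).-1).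
by apply/setP => e; rewrite !inE ffunE EM.
Qed.

Lemma Frec_sum n (E' M : {set E}) : M \subset E' -> (#|E' :\: M| <= n)%N ->
  Frec G A B d n E' M = Ssum E' M.
Proof.
elim: n E' M => [|n IH] E' M ME.
  rewrite leqn0 cards_eq0 => /eqP D0; by rewrite Ssum_base.
move=> cn /=; case: pickP => [e eD | N]; last first.
  rewrite Ssum_base //; apply/setP => x; rewrite in_set0; exact: N.
have eE : e \in E' by move: eD; rewrite inE => /andP[].
have eM : e \notin M by move: eD; rewrite inE => /andP[].
set Z := (E' :\: M) :\ e.
have cZ : (#|Z| <= n)%N by move: cn; rewrite (cardsD1 e) eD add1n ltnS.
have Z1 : (E' :\ e) :\: M = Z by apply/setP => x; rewrite !inE; case: (x == e); case: (x \in M).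
have Z2 : E' :\: (e |: M) = Z by apply/setP => x; rewrite !inE; case: (x == e); case: (x \in M).
have s1 : M \subset E' :\ e.
  by apply/subsetP => x xM; rewrite !inE (subsetP ME) // andbT; apply: contraNneq eM => <-.
have s2 : e |: M \subset E'.
  by apply/subsetP => x; rewrite !inE => /orP[/eqP ->|/(subsetP ME)].
rewrite (IH (E' :\ e) M s1) ?Z1 // (IH E' (e |: M) s2) ?Z2 //.
have split_prod : forall st : {ffun E -> bool},
    \prod_(i in E' :\: M) wt (cg_sign G i) (st i)
    = wt (cg_sign G e) (st e) * \prod_(i in Z) wt (cg_sign G i) (st i).
  move=> st; rewrite (bigD1 e) //=; congr (_ * _); apply: eq_bigl => x.
  by rewrite !inE andbC.
have C1 : forall st : {ffun E -> bool}, Cfg E' M st && ~~ st e = Cfg (E' :\ e) M st.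
  move=> st; apply/andP/forallP => [[/forallP H se] x | H].
    have := H x; rewrite !inE; case: (eqVneq x e) => [->|_] /=; last by [].
    by rewrite (negbTE eM) eE /= (negbTE se).
  have He := H e; move: He; rewrite !inE eqxx (negbTE eM) /= => se; split => //.
  apply/forallP => x; have := H x; rewrite !inE; case: (eqVneq x e) => [->|_] /=; last by [].
  by rewrite (negbTE eM) eE /= se.
have C2 : forall st : {ffun E -> bool}, Cfg E' M st && st e = Cfg E' (e |: M) st.
  move=> st; apply/andP/forallP => [[/forallP H se] x | H].
    have := H x; rewrite !inE; case: (eqVneq x e) => [->|_] /=; last by [].
    by rewrite se eE.
  have He := H e; move: He; rewrite !inE eqxx /= => /andP[se _]; split => //.
  apply/forallP => x; have := H x; rewrite !inE; case: (eqVneq x e) => [->|_] /=; last by [].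
  by rewrite (negbTE eM) eE /= se.
have -> : Ssum E' M =
    \sum_(st : {ffun E -> bool} | Cfg E' M st && st e)
     (\prod_(i in E' :\: M) wt (cg_sign G i) (st i)) * d ^+ (bc G [set i | st i]).-1
  + \sum_(st : {ffun E -> bool} | Cfg E' M st && ~~ st e)
     (\prod_(i in E' :\: M) wt (cg_sign G i) (st i)) * d ^+ (bc G [set i | st i]).-1.
  by rewrite /Ssum (bigID (fun st : {ffun E -> bool} => st e)).
rewrite /Ssum !mulr_sumr.
case: ifP => sg; rewrite addrC; congr (_ + _); apply: eq_big => st;
  rewrite ?C1 ?C2 // ?(esym (C1 st)) ?(esym (C2 st)) => /andP[_ se];
  rewrite split_prod mulrA ?Z1 ?Z2; congr (_ * _ * _);
  by rewrite /wt sg ?se ?(negbTE se).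
Qed.

Lemma Fpoly_sum : Fpoly G A B d =
  \sum_(st : {ffun E -> bool}) (\prod_e wt (cg_sign G e) (st e)) * d ^+ (bc G [set e | st e]).-1.
Proof.
rewrite /Fpoly Frec_sum ?sub0set ?setD0 ?cardsT // /Ssum.
apply: eq_big => [st|st _].
  by apply/forallP => e; rewrite !inE.
congr (_ * _); apply: eq_bigl => e; by rewrite !inE.
Qed.

End FrecSum.

Unset Implicit Arguments.
Theorem proposition4p4 (R : comPzRingType) (D : vdiagram)
    (col : vd_X D * 'I_4 -> bool) (A B d : R) :
  vdiagram_wf D -> checkerboard D col ->
  bracket D A B d = Fpoly (tait_graph D col) A B d.
Proof.
move=> wf cb; rewrite Fpoly_sum /bracket.
pose tw (st : {ffun vd_X D -> bool}) := [ffun c => st c == tait_sign D col c].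
have twK : involutive tw.
  by move=> st; apply/ffunP => c; rewrite !ffunE; case: (st c); case: (tait_sign D col c).
rewrite [RHS](reindex_inj (can_inj twK)) /=.
apply: eq_bigr => st _.
have -> : [set e | tw st e] = H col st by apply/setP => c; rewrite !inE ffunE.
rewrite -(curves_bc wf cb st); congr (_ * _)%R.
rewrite (eq_bigr (fun e => if st e then A else B)); last first.
  by move=> e _; rewrite /wt ffunE; case: (st e); case: (tait_sign D col e).
rewrite (bigID (fun e => st e)) /= -!prodr_const; congr (_ * _)%R.
  by apply: eq_big => e; rewrite ?inE // => ->.
by apply: eq_big => e; rewrite ?inE // => /negbTE ->.
Qed.
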